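(* There are first-order formulas $\varphi_{\mathrm{same\text{-}col}}(x,y)$, $\varphi_{\mathrm{same\text{-}row}}(x,y)$, $\varphi_q(x,y)$ and $\varphi_{rc}(x,y)$ over two binary relation symbols $<$ and $\lhd$ such that for every $n\in\mathbb{N}$ and all $a,b\in[n]$, in the structure $([n],<^n,\lhd^n)$: $\varphi_{\mathrm{same\text{-}col}}(a,b)$ holds iff $c(a)=c(b)$; $\varphi_{\mathrm{same\text{-}row}}(a,b)$ holds iff $r(a)=r(b)$; $\varphi_q(a,b)$ holds iff $q(a)=b$; and $\varphi_{rc}(a,b)$ holds iff $r(a)=c(b)$.
   Context: $[n]=\{0,1,\dots,n\}$; $<$ is the usual order on $\mathbb{N}$ and $P^n=P\cap[n]^2$ for a binary relation $P$ on $\mathbb{N}$. Let $q_i=\frac{i(i+1)}{2}$. For $x\in\mathbb{N}$ let $c(x)=\max\{i: q_i\le x\}$, $q(x)=q_{c(x)}$, $r(x)=x-q(x)$. The linear order $\lhd$ on $\mathbb{N}$: $x\lhd y$ iff $r(x)<r(y)$, or $r(x)=r(y)$ and $c(x)<c(y)$. *)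

(* Defs.v *)
From mathcomp Require Import all_boot.
Set Implicit Arguments. Unset Strict Implicit. Unset Printing Implicit Defensive.

Definition qi (i : nat) : nat := (i * i.+1) %/ 2.

(* c(x) = max { i : q_i <= x }  (any such i satisfies i <= q_i <= x) *)
Definition cc (x : nat) : nat := \max_(i < x.+1 | qi i <= x) i.
Definition qq (x : nat) : nat := qi (cc x).
Definition rr (x : nat) : nat := x - qq x.

Definition lhd (x y : nat) : bool :=
  (rr x < rr y) || ((rr x == rr y) && (cc x < cc y)).

Definition restr (n : nat) (P : nat -> nat -> bool) (x y : nat) : Prop :=
  [/\ P x y, x <= n & y <= n].

(* First-order formulas over two binary relation symbols R1 (<) and R2 (<|),
   with equality; variables are natural numbers. *)
Inductive form : Type :=
  | FEq  : nat -> nat -> form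
  | FR1  : nat -> nat -> form
  | FR2  : nat -> nat -> form
  | FNot : form -> form
  | FAnd : form -> form -> form
  | FEx  : nat -> form -> form.

Definition upd (e : nat -> nat) (v a : nat) : nat -> nat :=
  fun k => if k == v then a else e k.

Fixpoint sat (n : nat) (R1 R2 : nat -> nat -> Prop) (e : nat -> nat)
    (phi : form) : Prop :=
  match phi with
  | FEq i j => e i = e j
  | FR1 i j => R1 (e i) (e j)
  | FR2 i j => R2 (e i) (e j)
  | FNot f => ~ sat n R1 R2 e f
  | FAnd f g => sat n R1 R2 e f /\ sat n R1 R2 e g
  | FEx v f => exists a, a <= n /\ sat n R1 R2 (upd e v a) f
  end.

Definition satN (n : nat) (e : nat -> nat) (phi : form) : Prop :=
  sat n (restr n (fun x y => x < y)) (restr n lhd) e phi.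

(* Main.v *)
Require Import Defs.
From mathcomp Require Import all_boot zify.
From Stdlib Require Import Classical.
Set Implicit Arguments.
Unset Strict Implicit.

Lemma qiS c : qi c.+1 = qi c + c.+1.
Proof. rewrite /qi. have -> : c.+1 * c.+2 = c * c.+1 + c.+1 * 2 by nia.
  by rewrite divnDr ?dvdn_mull // mulnK. Qed.
Lemma qi_mono i j : i <= j -> qi i <= qi j.
Proof. move=> H; rewrite /qi leq_div2r // leq_mul //. Qed.
Lemma qi_ge i : i <= qi i.
Proof. elim: i => // i IH; rewrite qiS; lia. Qed.
Lemma cc_le x : qi (cc x) <= x.
Proof. rewrite /cc. apply: (big_ind (fun m => qi m <= x)) => //.
  move=> a b Ha Hb. by rewrite /maxn; case: ifP. Qed.
Lemma cc_max x i : qi i <= x -> i <= cc x.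
Proof. move=> H. have Hi : i < x.+1 by have := qi_ge i; lia.
  rewrite /cc. exact: (@leq_bigmax_cond _ (fun j : 'I_x.+1 => qi j <= x) (fun j => nat_of_ord j) (Ordinal Hi)). Qed.
Lemma x_lt x : x < qi (cc x).+1.
Proof. rewrite ltnNge; apply/negP => H. have := cc_max H. lia. Qed.
Lemma rr_le x : rr x <= cc x.
Proof. rewrite /rr /qq. have := x_lt x; rewrite qiS. have := cc_le x. lia. Qed.
Lemma x_eq x : x = qi (cc x) + rr x.
Proof. rewrite /rr /qq. have := cc_le x. lia. Qed.
Lemma cc_pos c r : r <= c -> cc (qi c + r) = c.
Proof. move=> H. apply/eqP; rewrite eqn_leq cc_max ?leq_addr // andbT.
  have := cc_le (qi c + r). case: (leqP (cc (qi c + r)) c) => // H2.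
  have := qi_mono H2. rewrite qiS. lia. Qed.
Lemma rr_pos c r : r <= c -> rr (qi c + r) = r.
Proof. move=> H. rewrite /rr /qq cc_pos //. lia. Qed.
Lemma crfacts x y : cc x < cc y -> x < y.
Proof. move=> H. have := qi_mono H. rewrite qiS. have := cc_le y. have := x_lt x. rewrite qiS. lia. Qed.
Lemma ltE x y : (x < y) = (cc x < cc y) || ((cc x == cc y) && (rr x < rr y)).
Proof. case: (ltngtP (cc x) (cc y)) => H.
- by rewrite (crfacts H).
- have := crfacts H. rewrite /=. lia.
- rewrite /= (x_eq x) (x_eq y) H. rewrite !(cc_pos, rr_pos) ?rr_le //; try lia; by rewrite -H rr_le. Qed.
Lemma eqE x y : (x == y) = (cc x == cc y) && (rr x == rr y).
Proof. case: (ltngtP (cc x) (cc y)) => H.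
- have := crfacts H. rewrite /=. lia.
- have := crfacts H. rewrite /=. lia.
- rewrite /= (x_eq x) (x_eq y) H. rewrite !(cc_pos, rr_pos) ?rr_le //; try lia; by rewrite -H rr_le. Qed.
Lemma leE x y : (x <= y) = (cc x < cc y) || ((cc x == cc y) && (rr x <= rr y)).
Proof. rewrite leq_eqVlt eqE ltE. lia. Qed.
Definition FOr f g := FNot (FAnd (FNot f) (FNot g)).
Definition FAll v f := FNot (FEx v (FNot f)).
Definition FImp f g := FNot (FAnd f (FNot g)).
Definition FLe x y := FNot (FR1 y x).

Section S.
Variables (n : nat).
Lemma sAnd e f g : satN n e (FAnd f g) <-> satN n e f /\ satN n e g. Proof. by []. Qed.
Lemma sNot e f : satN n e (FNot f) <-> ~ satN n e f. Proof. by []. Qed.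
Lemma sEq e i j : satN n e (FEq i j) <-> e i = e j. Proof. by []. Qed.
Lemma sR1 e i j : satN n e (FR1 i j) <-> [/\ e i < e j, e i <= n & e j <= n]. Proof. by []. Qed.
Lemma sR2 e i j : satN n e (FR2 i j) <-> [/\ lhd (e i) (e j), e i <= n & e j <= n]. Proof. by []. Qed.
Lemma sEx e v f : satN n e (FEx v f) <-> exists a, a <= n /\ satN n (upd e v a) f. Proof. by []. Qed.
Lemma sOr e f g : satN n e (FOr f g) <-> satN n e f \/ satN n e g.
Proof. change (~ (~ satN n e f /\ ~ satN n e g) <-> satN n e f \/ satN n e g). have := classic (satN n e f). tauto. Qed.
Lemma sImp e f g : satN n e (FImp f g) <-> (satN n e f -> satN n e g).
Proof. change (~ (satN n e f /\ ~ satN n e g) <-> (satN n e f -> satN n e g)). have := classic (satN n e g). tauto. Qed.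
Lemma sAll e v f : satN n e (FAll v f) <-> forall a, a <= n -> satN n (upd e v a) f.
Proof. change (~ (exists a, a <= n /\ ~ satN n (upd e v a) f) <-> forall a, a <= n -> satN n (upd e v a) f). split.
- move=> H a Ha. apply: NNPP => H'. apply: H. by exists a.
- move=> H [a [Ha H']]. exact: H' (H a Ha). Qed.
End S.
Lemma updE e v a k : upd e v a k = if k == v then a else e k. Proof. by []. Qed.

Arguments qi : simpl never.
Arguments cc : simpl never.
Arguments rr : simpl never.
Arguments qq : simpl never.
Arguments lhd : simpl never.
Ltac simp := rewrite ?sImp ?sAnd ?sNot ?sR1 ?sR2 ?sEq ?updE /=.

Lemma pos0 x : 0 < x -> 0 < cc x.
Proof. have := x_eq x; have := rr_le x. case: (cc x) => // H1 H2. rewrite /qi /= in H2. lia. Qed.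

Definition Ccol x y := FAnd (FR1 x y) (FAnd (FEx 10 (FR1 10 x))
  (FAll 11 (FAll 10 (FImp (FAnd (FLe x 10) (FAnd (FR1 10 11) (FLe 11 y))) (FR2 10 11))))).

Lemma Ccol_sem n e x y : x != 10 -> x != 11 -> y != 10 -> y != 11 -> e x <= n -> e y <= n ->
  satN n e (Ccol x y) <-> e x < e y /\ cc (e x) = cc (e y).
Proof.
move=> x10 x11 y10 y11 xn yn.
rewrite /Ccol sAnd sR1 sAnd sEx sAll.
split.
- case=> [[lxy _ _] [[w [wn]]]]. simp. rewrite (negbTE x10) => -[wx _ _] Hall.
  split=> //.
  have cx0 := pos0 (leq_ltn_trans (leq0n w) wx).
  have := rr_le (e x); have := rr_le (e y). move: (lxy); rewrite ltE => lxy'.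
  move=> r1 r2.
  apply/eqP; apply: contraT => hne.
  have lc : cc (e x) < cc (e y) by lia.
  set c := cc (e x) in cx0 lc r2 *.
  have Zn : qi c.+1 + 0 <= n.
  { apply: leq_trans yn. rewrite leE cc_pos // rr_pos //. lia. }
  have Wn : qi c + c <= n.
  { apply: leq_trans Zn. rewrite leE !cc_pos // !rr_pos //. lia. }
  have := Hall _ Zn. rewrite sAll => /(_ _ Wn). simp.
  rewrite (negbTE x10) (negbTE x11) (negbTE y10) (negbTE y11).
  move=> H. lapply H; first by case=> Hl _ _; move: Hl; rewrite /lhd !cc_pos // !rr_pos //; lia.
  split; [|split].
  - case=> h _ _. move: h; rewrite ltE cc_pos // rr_pos //. lia.
  - split => //. rewrite ltE !cc_pos // !rr_pos //. lia.
  - case=> h _ _. move: h; rewrite ltE cc_pos // rr_pos //. lia.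
- case=> lxy ceq. split; first by []. split.
  + (exists 0; split => //). simp. rewrite (negbTE x10). (split => //).
    (move: (lxy); rewrite ltE => h). have := rr_le (e y); have := x_eq (e x); have := qi_ge (cc (e x)). lia.
  + (move=> z zn; rewrite sAll => w wn). simp.
    rewrite (negbTE x10) (negbTE x11) (negbTE y10) (negbTE y11).
    move=> [h1 [[h2 _ _] h3]]. (split => //).
    have h1' : ~~ (w < e x) by apply/negP => q; apply: h1.
    have h3' : ~~ (e y < z) by apply/negP => q; apply: h3.
    have c1 : cc (e x) <= cc w.
    { move: h1'; rewrite ltE; apply: contraR; rewrite -ltnNge => ->. done. }
    have c2 : cc w <= cc z.
    { move: h2; rewrite ltE; case/orP => [/ltnW|/andP[/eqP -> _]] //. }
    have c3 : cc z <= cc (e y).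
    { move: h3'; rewrite ltE; apply: contraR; rewrite -ltnNge => ->. done. }
    have E1 : cc w = cc z by lia.
    move: h2; rewrite /lhd ltE E1 ltnn eqxx /= => ->. done.
Qed.


Definition col x y := FOr (FEq x y) (FOr (Ccol x y) (Ccol y x)).

Lemma col_sem n e x y : x != 10 -> x != 11 -> y != 10 -> y != 11 -> e x <= n -> e y <= n ->
  satN n e (col x y) <-> cc (e x) = cc (e y).
Proof.
move=> x10 x11 y10 y11 xn yn.
rewrite /col sOr sEq sOr !Ccol_sem //. split.
- by case=> [->|[[_ ->]|[_ ->]]].
- move=> ceq. case: (ltngtP (e x) (e y)) => h.
  + by right; left.
  + by right; right.
  + by left.
Qed.

Definition Rrow x y := FAnd (FR2 x y) (FAnd (FR1 x y)
  (FAll 12 (FImp (FAnd (col 12 y) (FR1 12 y)) (FR2 12 x)))).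

Lemma Rrow_sem n e x y : x != 10 -> x != 11 -> x != 12 -> y != 10 -> y != 11 -> y != 12 ->
  e x <= n -> e y <= n ->
  satN n e (Rrow x y) <-> e x < e y /\ rr (e x) = rr (e y).
Proof.
move=> x10 x11 x12 y10 y11 y12 xn yn.
rewrite /Rrow sAnd sR2 sAnd sR1 sAll. split.
- case=> [[lh _ _] [[lxy _ _] Hall]]. split => //.
  apply/eqP; apply: contraT => hne.
  have hl : rr (e x) < rr (e y) by move: lh; rewrite /lhd; lia.
  set c := cc (e y). set r := (rr (e y)).-1.
  have rc : r <= c by have := rr_le (e y); rewrite /r /c; lia.
  have zy : qi c + r < e y.
  { rewrite ltE cc_pos // rr_pos //. rewrite /c eqxx /=. rewrite /r; lia. }
  have zn : qi c + r <= n by apply: leq_trans (ltnW zy) yn.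
  have := Hall _ zn. rewrite sImp sAnd col_sem; last first.
  + by rewrite updE (negbTE y12).
  + by rewrite updE.
  + by []. + by []. + by []. + by [].
  simp. rewrite (negbTE y12) (negbTE x12) => H. lapply H.
  + case=> hh _ _. move: hh. rewrite /lhd cc_pos // rr_pos // /c /r. move: lxy; rewrite ltE. lia.
  + split; first by rewrite cc_pos. by split.
- case=> lxy req. have cl : cc (e x) < cc (e y).
  { move: lxy; rewrite ltE req ltnn andbF orbF. done. }
  split; first by split => //; rewrite /lhd req ltnn eqxx cl.
  split; first by [].
  move=> z zn. rewrite sImp sAnd col_sem; last first.
  + by rewrite updE (negbTE y12).
  + by rewrite updE.
  + by []. + by []. + by []. + by [].
  simp. rewrite (negbTE y12) (negbTE x12) => -[cz [hz _ _]]. split => //.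
  move: hz. rewrite /lhd ltE cz ltnn eqxx /= -req => ->. done.
Qed.

Definition row x y := FOr (FEq x y) (FOr (Rrow x y) (Rrow y x)).

Lemma row_sem n e x y : x != 10 -> x != 11 -> x != 12 -> y != 10 -> y != 11 -> y != 12 ->
  e x <= n -> e y <= n ->
  satN n e (row x y) <-> rr (e x) = rr (e y).
Proof.
move=> x10 x11 x12 y10 y11 y12 xn yn.
rewrite /row sOr sEq sOr !Rrow_sem //. split.
- by case=> [->|[[_ ->]|[_ ->]]].
- move=> req. case: (ltngtP (e x) (e y)) => h.
  + by right; left.
  + by right; right.
  + by left.
Qed.

Definition diag d := FNot (FEx 13 (FAnd (row 13 d) (FR2 13 d))).

Lemma diag_sem n e d : d != 10 -> d != 11 -> d != 12 -> d != 13 -> e d <= n ->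
  satN n e (diag d) <-> rr (e d) = cc (e d).
Proof.
move=> d10 d11 d12 d13 dn.
rewrite /diag sNot sEx. split.
- move=> H. apply/eqP; apply: contraT => hne.
  have hl : rr (e d) < cc (e d) by have := rr_le (e d); lia.
  set c := (cc (e d)).-1. set r := rr (e d).
  have rc : r <= c by rewrite /r /c; lia.
  have zd : qi c + r < e d.
  { rewrite ltE cc_pos // rr_pos //. rewrite /c. have -> : (cc (e d)).-1 < cc (e d) by lia. done. }
  have zn : qi c + r <= n by apply: leq_trans (ltnW zd) dn.
  exfalso; apply: H. exists (qi c + r); split => //.
  rewrite sAnd row_sem; try (by rewrite ?updE /= ?(negbTE d13) //).
  simp. rewrite (negbTE d13) rr_pos //. split => //. split => //.
  rewrite /lhd cc_pos // rr_pos // ltnn eqxx /= /c. lia.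
- move=> req [z [zn]]. rewrite sAnd row_sem; try (by rewrite ?updE /= ?(negbTE d13) //).
  simp. rewrite (negbTE d13) => -[rz [hl _ _]].
  move: hl; rewrite /lhd rz ltnn eqxx /=. have := rr_le z. lia.
Qed.

Definition phi_q := FAnd (col 0 1) (FNot (FEx 12 (FAnd (col 12 1) (FR1 12 1)))).
Definition phi_rc := FEx 14 (FAnd (row 0 14) (FAnd (col 14 1) (diag 14))).

Theorem lemma3p3 :
  exists phi_col phi_row phi_q phi_rc : form,
    forall (n a b : nat) (e : nat -> nat),
      a <= n -> b <= n -> e 0 = a -> e 1 = b ->
      [/\ satN n e phi_col <-> cc a = cc b,
          satN n e phi_row <-> rr a = rr b,
          satN n e phi_q <-> qq a = b
        & satN n e phi_rc <-> rr a = cc b].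
Proof.
exists (col 0 1), (row 0 1), phi_q, phi_rc.
move=> n a b e an bn e0 e1. split.
- by rewrite col_sem ?e0 ?e1.
- by rewrite row_sem ?e0 ?e1.
- rewrite /phi_q sAnd col_sem ?e0 ?e1 // sNot sEx. split.
  + case=> ceq H. have rb : rr b = 0.
    { apply/eqP; apply: contraT => hne. exfalso; apply: H.
      have zb : qi (cc b) + 0 < b.
      { rewrite ltE cc_pos // rr_pos // eqxx ltnn /=. lia. }
      exists (qi (cc b) + 0); split; first by apply: leq_trans (ltnW zb) bn.
      rewrite sAnd col_sem; try (by rewrite ?updE /= ?e1 //).
      simp. rewrite e1 cc_pos //. split => //; split => //; apply: leq_trans (ltnW zb) bn.
      by rewrite updE /=; apply: leq_trans (ltnW zb) bn. }
    by rewrite /qq ceq {2}(x_eq b) rb addn0.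
  + move=> qb. have cq : cc b = cc a by rewrite -qb /qq -(addn0 (qi _)) cc_pos.
    split; first by rewrite cq.
    case=> z [zn]. rewrite sAnd col_sem; try (by rewrite ?updE /= ?e1 //).
    simp. rewrite e1 => -[cz [hz _ _]]. move: hz.
    rewrite ltE cz ltnn eqxx /= -qb /qq -(addn0 (qi _)) rr_pos //.
- rewrite /phi_rc sEx. split.
  + case=> d [dn]. rewrite !sAnd row_sem; try (by rewrite ?updE /= ?e0 ?e1 //).
    rewrite col_sem; try (by rewrite ?updE /= ?e0 ?e1 //).
    rewrite diag_sem; try (by rewrite ?updE /= ?e0 ?e1 //).
    simp. rewrite e0 e1. case=> h1 [h2 h3]. by rewrite h1 h3 h2.
  + move=> req. set k := rr a.
    have kk : k <= k by [].
    have da : qi k + k <= a.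
    { rewrite leE !cc_pos // !rr_pos //. have := rr_le a. rewrite /k. case: ltngtP => //=; lia. }
    exists (qi k + k); split; first by apply: leq_trans da an.
    rewrite !sAnd row_sem; try (by rewrite ?updE /= ?e0 ?e1 //; apply: leq_trans da an).
    rewrite col_sem; try (by rewrite ?updE /= ?e0 ?e1 //; apply: leq_trans da an).
    rewrite diag_sem; try (by rewrite ?updE /= ?e0 ?e1 //; apply: leq_trans da an).
    simp. rewrite e0 e1 !cc_pos // !rr_pos //.
Qed.
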